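(* For all finite simple graphs $G$ and $H$, $\alpha_{\mathcal S}(G\boxtimes H)\le\alpha_{\mathcal S}(G)\,\alpha_{\mathcal S}(H)$.
   Context: The strong product $G\boxtimes H$ has vertex set $V(G)\times V(H)$, with $(i,j)\sim(i',j')$ iff ($i\sim_G i'$ and $j\sim_H j'$) or ($i\sim_G i'$ and $j=j'$) or ($i=i'$ and $j\sim_H j'$). For a graph on $n$ vertices, a weighted adjacency matrix is a real symmetric $A$ with $A_{ii}=0$ and $A_{ij}=0$ for non-adjacent $i\ne j$; $\mathcal S_n=\{\boldsymbol v\in\mathbb R^n:\langle\boldsymbol 1,\boldsymbol v\rangle=|\boldsymbol v|^2\}$ with $\boldsymbol 1$ the all-ones vector; and the spherical independence number is $\alpha_{\mathcal S}(G)=\inf_A\sup\{|\boldsymbol v|^2:\boldsymbol v\in\mathcal S_n,\ \langle\boldsymbol v,A\boldsymbol v\rangle=0\}$ over weighted adjacency matrices $A$ of $G$. *)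

(* Defs.v *)
From mathcomp Require Import all_boot all_order all_algebra.
From mathcomp Require Import boolp classical_sets reals.
Set Implicit Arguments. Unset Strict Implicit. Unset Printing Implicit Defensive.
Import Order.TTheory GRing.Theory Num.Theory.
Local Open Scope ring_scope.
Local Open Scope classical_set_scope.

Definition simple_graph (T : finType) (e : rel T) : Prop :=
  symmetric e /\ irreflexive e.

Definition strong_prod (T1 T2 : finType) (e1 : rel T1) (e2 : rel T2) : rel (T1 * T2) :=
  fun x y => [|| e1 x.1 y.1 && e2 x.2 y.2,
                 e1 x.1 y.1 && (x.2 == y.2)
               | (x.1 == y.1) && e2 x.2 y.2].

Definition weighted_adj (R : realType) (T : finType) (e : rel T) (A : T -> T -> R) : Prop :=
  [/\ forall i j, A i j = A j i,
      forall i, A i i = 0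
    & forall i j, i != j -> ~~ e i j -> A i j = 0].

Definition sqnorm (R : realType) (T : finType) (v : T -> R) : R := \sum_i v i ^+ 2.
Definition qform (R : realType) (T : finType) (A : T -> T -> R) (v : T -> R) : R :=
  \sum_i \sum_j v i * A i j * v j.

Definition in_S (R : realType) (T : finType) (v : T -> R) : Prop :=
  \sum_i v i = sqnorm v.

Definition sup_val (R : realType) (T : finType) (A : T -> T -> R) : R :=
  sup [set sqnorm v | v in [set v : T -> R | in_S v /\ qform A v = 0]].

Definition alphaS (R : realType) (T : finType) (e : rel T) : R :=
  inf [set sup_val A | A in [set A : T -> T -> R | weighted_adj e A]].

(* Main.v *)
Require Import Defs.
From mathcomp Require Import all_boot all_order all_algebra.
From mathcomp Require Import boolp classical_sets reals.
From mathcomp Require Import ring lra.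
Import Order.TTheory GRing.Theory Num.Theory.
Local Open Scope ring_scope.
Set Implicit Arguments. Unset Strict Implicit. Unset Printing Implicit Defensive.

Section Aux.
Variable R : realType.
Variable T : finType.
Implicit Types (G Z : T -> T -> R) (x y : T -> R).

Lemma sum_delta_r (F : T -> R) p : \sum_j F j * (j == p)%:R = F p.
Proof.
rewrite (bigD1 p) //= eqxx mulr1 big1 ?addr0 // => j /negbTE ->; by rewrite mulr0.
Qed.

Lemma sum_delta_l (F : T -> R) p : \sum_j (j == p)%:R * F j = F p.
Proof. rewrite -[RHS](sum_delta_r F p); apply: eq_bigr => j _; by rewrite mulrC. Qed.

Lemma sum2D (F1 F2 : T -> T -> R) :
  \sum_i \sum_j (F1 i j + F2 i j) = \sum_i \sum_j F1 i j + \sum_i \sum_j F2 i j.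
Proof. rewrite -big_split; apply: eq_bigr => i _; by rewrite big_split. Qed.

Lemma sum2M (c : R) (F1 : T -> T -> R) :
  \sum_i \sum_j (c * F1 i j) = c * \sum_i \sum_j F1 i j.
Proof. rewrite mulr_sumr; apply: eq_bigr => i _; by rewrite mulr_sumr. Qed.

Definition bil G x y := \sum_i \sum_j x i * G i j * y j.

Lemma qform_lin G x y s t :
  qform G (fun k => s * x k + t * y k) =
  s^+2 * qform G x + s * t * (bil G x y + bil G y x) + t^+2 * qform G y.
Proof.
rewrite /qform /bil.
transitivity (\sum_i \sum_j (s^+2 * (x i * G i j * x j) + s*t*(x i * G i j * y j + y i * G i j * x j) + t^+2 * (y i * G i j * y j))).
  by apply: eq_bigr => i _; apply: eq_bigr => j _; ring.
by rewrite !sum2D !sum2M sum2D.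

Qed.

Lemma qform_delta2 G p q s t :
  qform G (fun k => s * (k == p)%:R + t * (k == q)%:R) =
  s^+2 * G p p + s * t * (G p q + G q p) + t^+2 * G q q.
Proof.
rewrite qform_lin /qform /bil.
have E : forall a b, \sum_i \sum_j (i == a)%:R * G i j * (j == b)%:R = G a b.
  move=> a b; transitivity (\sum_i (i == a)%:R * \sum_j G i j * (j == b)%:R);
    last by rewrite (sum_delta_l (fun i => \sum_j G i j * (j == b)%:R)) sum_delta_r.
  apply: eq_bigr => i _; rewrite mulr_sumr; apply: eq_bigr => j _; by rewrite mulrA.
by rewrite !E.
Qed.

Definition psd G := forall x, 0 <= qform G x.

Lemma psd_diag G p : psd G -> 0 <= G p p.
Proof.
move=> H; have := H (fun k => 1 * (k == p)%:R + 0 * (k == p)%:R).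
rewrite qform_delta2; lra.
Qed.

Lemma psd_zero_row G p : psd G -> (forall i j, G i j = G j i) -> G p p = 0 ->
  forall j, G p j = 0.
Proof.
move=> H S Gpp j.
case: (eqVneq (G p j) 0) => // Hne.
pose t := - (G j j + 1) / (2 * G p j).
have := H (fun k => t * (k == p)%:R + 1 * (k == j)%:R).
rewrite qform_delta2 Gpp (S j p).
have -> : t * 1 * (G p j + G p j) = - (G j j + 1).
  rewrite /t; field; exact: Hne.
lra.
Qed.

Lemma qform_ignore G p x y : (forall j, G p j = 0) -> (forall j, G j p = 0) ->
  (forall k, k != p -> x k = y k) -> qform G x = qform G y.
Proof.
move=> H1 H2 Hxy; rewrite /qform; apply: eq_bigr => i _; apply: eq_bigr => j _.
case: (eqVneq i p) => [->|ip]; first by rewrite H1 !(mulr0, mul0r).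
case: (eqVneq j p) => [->|jp]; first by rewrite H2 !(mulr0, mul0r).
by rewrite !Hxy.
Qed.


Lemma sqr_sum (a : T -> R) : (\sum_i a i) ^+ 2 = \sum_i \sum_j a i * a j.
Proof. rewrite expr2 mulr_suml; apply: eq_bigr => i _; by rewrite mulr_sumr. Qed.

Lemma qform_sub_rank1 G p y :
  qform (fun i j => G i j - G p i * G p j / G p p) y =
  qform G y - (\sum_k G p k * y k) ^+ 2 / G p p.
Proof.
rewrite sqr_sum mulr_suml /qform -sumrB; apply: eq_bigr => i _.
rewrite mulr_suml -sumrB; apply: eq_bigr => j _; ring.
Qed.

Lemma frob_psd G Z : (forall i j, G i j = G j i) -> psd G -> psd Z ->
  0 <= \sum_i \sum_j G i j * Z i j.
Proof.
move=> GS Gpsd Zpsd.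
suff H : forall n (S : {set T}) G, (#|S| <= n)%N -> (forall i j, i \notin S -> G i j = 0) ->
  (forall i j, G i j = G j i) -> psd G -> 0 <= \sum_i \sum_j G i j * Z i j.
  by apply: (H _ [set: T]%SET G (leqnn _)) => // i j; rewrite finset.in_setT.
elim=> [|n IH] S G0 HS Hsupp Hsym Hpsd.
  have S0 : S = finset.set0 by apply/eqP; rewrite -cards_eq0; move: HS; rewrite leqn0.
  rewrite big1 // => i _; rewrite big1 // => j _; by rewrite Hsupp ?mul0r // S0 finset.in_set0.
case: (set_0Vmem S) => [S0|[p pS]].
  rewrite big1 // => i _; rewrite big1 // => j _; by rewrite Hsupp ?mul0r // S0 finset.in_set0.
have HS' : (#|S :\ p| <= n)%N by move: HS; rewrite (cardsD1 p S) pS add1n ltnS.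
have Gpp0 := psd_diag p Hpsd.
case: (eqVneq (G0 p p) 0) => [Gpp|Gppne].
  apply: (IH (S :\ p)) => // i j; rewrite in_setD1 negb_and negbK => /orP[/eqP->|iS].
    exact: psd_zero_row.
  exact: Hsupp.
have Gpos : 0 < G0 p p by rewrite lt_def Gppne Gpp0.
pose G' := fun i j => G0 i j - G0 p i * G0 p j / G0 p p.
have G'p : forall j, G' p j = 0 by move=> j; rewrite /G'; field; exact: Gppne.
have G'p2 : forall j, G' j p = 0 by move=> j; rewrite /G' Hsym (Hsym p j); field; exact: Gppne.
have G'sym : forall i j, G' i j = G' j i by move=> i j; rewrite /G' Hsym; ring.
have G'psd : psd G'.
  move=> x; pose c := (\sum_k G0 p k * x k) / G0 p p.
  pose x' := fun k => x k - (k == p)%:R * c.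
  rewrite (@qform_ignore G' p x x') //; last first.
    by move=> k /negbTE kp; rewrite /x' kp mul0r subr0.
  rewrite qform_sub_rank1.
  have -> : \sum_k G0 p k * x' k = 0.
    rewrite /x'; under eq_bigr do rewrite mulrBr.
    rewrite sumrB.
    have -> : \sum_i G0 p i * ((i == p)%:R * c) = G0 p p * c.
      rewrite -(sum_delta_r (fun i => G0 p i * c) p); apply: eq_bigr => i _; ring.
    rewrite /c; field; exact: Gppne.
  by rewrite expr0n /= mul0r subr0.
have E : \sum_i \sum_j G0 i j * Z i j =
   \sum_i \sum_j G' i j * Z i j + (\sum_i \sum_j G0 p i * Z i j * G0 p j) / G0 p p.
  rewrite [_ / G0 p p]mulrC -sum2M -sum2D; apply: eq_bigr => i _.
  apply: eq_bigr => j _ /=; rewrite /G'; field; exact: Gppne.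
rewrite E; apply: addr_ge0.
  apply: (IH (S :\ p)) => // i j; rewrite in_setD1 negb_and negbK => /orP[/eqP->|iS].
    exact: G'p.
  rewrite /G' Hsupp // (Hsym p i) Hsupp //; by rewrite !(mul0r, mulr0, subr0).
apply: divr_ge0 => //; exact: Zpsd.
Qed.

End Aux.
Section SL.
Variable R : realType.
Variable T : finType.
Implicit Types (M A : T -> T -> R) (x y z : T -> R).

Lemma two_point M A : (forall z, qform A z = 0 -> 0 <= qform M z) ->
  forall x y, 0 < qform A x -> qform A y < 0 ->
  0 <= qform M x * (- qform A y) + qform M y * qform A x.
Proof.
move=> H x y ax ay.
set al := qform A x in ax *; set ga := qform A y in ay *.
set B := bil A x y + bil A y x.
set mx := qform M x; set my := qform M y; set C := bil M x y + bil M y x.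
set D := B^+2 / 4 - al * ga.
have D0 : 0 < D by rewrite /D; nra.
set d := Num.sqrt D.
have hd : d ^+ 2 = D by rewrite sqr_sqrtr // ltW.
have d0 : 0 <= d by exact: sqrtr_ge0.
have dpos : 0 < d by rewrite lt_def d0 andbT; apply/eqP => d0'; move: hd; rewrite d0' expr0n /=; lra.
pose u1 := - (B / 2) + d; pose u2 := - (B / 2) - d.
have key : forall u, u ^+ 2 + B * u + al * ga = 0 -> 0 <= u ^+ 2 * mx + u * al * C + al ^+ 2 * my.
  move=> u hu; have := H (fun k => u * x k + al * y k).
  rewrite !qform_lin -/al -/ga -/B -/mx -/my -/C => h.
  apply: h.
  have -> : u ^+ 2 * al + u * al * B + al ^+ 2 * ga = al * (u ^+ 2 + B * u + al * ga) by ring.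
  by rewrite hu mulr0.
have hD : al * ga = B^+2/4 - d^+2 by rewrite hd /D; ring.
have q1 : 0 <= u1 ^+ 2 * mx + u1 * al * C + al ^+ 2 * my.
  by apply: key; rewrite hD /u1; field.
have q2 : 0 <= u2 ^+ 2 * mx + u2 * al * C + al ^+ 2 * my.
  by apply: key; rewrite hD /u2; field.
have u1p : 0 < u1.
  rewrite /u1; have : (B/2)^+2 < d^+2 by rewrite hd /D; nra.
  nra.
have u2n : u2 < 0.
  rewrite /u2; have : (B/2)^+2 < d^+2 by rewrite hd /D; nra.
  nra.
have S := addr_ge0 (mulr_ge0 (ltW (ltac:(rewrite oppr_gt0; exact: u2n) : 0 < - u2)) q1) (mulr_ge0 (ltW u1p) q2).
have prod : u1 * u2 = al * ga.
  by rewrite hD /u1 /u2; field.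
have id : - u2 * (u1 ^+ 2 * mx + u1 * al * C + al ^+ 2 * my) +
          u1 * (u2 ^+ 2 * mx + u2 * al * C + al ^+ 2 * my) =
          (u1 - u2) * (al ^+ 2 * my - u1 * u2 * mx) by ring.
rewrite id prod in S.
have u12 : 0 < u1 - u2 by lra.
have : 0 <= al ^+ 2 * my - al * ga * mx by rewrite -(pmulr_rge0 _ u12).
move=> h; have : 0 <= al * (mx * - ga + my * al).
  have -> : al * (mx * - ga + my * al) = al ^+ 2 * my - al * ga * mx by ring.
  exact: h.
by rewrite pmulr_rge0.
Qed.

End SL.
Section SL2.
Variable R : realType.
Variable T : finType.
Implicit Types (M A : T -> T -> R) (x y z : T -> R).
Local Open Scope classical_set_scope.

Lemma s_lemma M A : (forall z, qform A z = 0 -> 0 <= qform M z) ->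
  (exists x, 0 < qform A x) -> (exists y, qform A y < 0) ->
  exists l, forall z, 0 <= qform M z + l * qform A z.
Proof.
move=> H [x0 hx0] [y0 hy0].
pose L := [set - qform M x / qform A x | x in [set x | 0 < qform A x]].
have ub : forall y, qform A y < 0 -> ubound L (qform M y / (- qform A y)).
  move=> y hy _ [x /= hx <-].
  have hy' : 0 < - qform A y by rewrite oppr_gt0.
  rewrite ler_pdivrMr // mulrAC ler_pdivlMr //.
  have := two_point H hx hy; lra.
have hub : has_ubound L by exists (qform M y0 / (- qform A y0)); exact: ub.
have ne : L !=set0 by exists (- qform M x0 / qform A x0); exists x0.
exists (sup L) => z.
case: (ltgtP (qform A z) 0) => hz.
- have hz' : 0 < - qform A z by rewrite oppr_gt0.
  have := ge_sup ne (ub z hz).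
  rewrite ler_pdivlMr //; lra.
- have := ub_le_sup hub (ex_intro2 _ _ z hz erefl).
  rewrite ler_pdivrMr //; lra.
- by rewrite hz mulr0 addr0; apply: H.
Qed.

Definition Mq (a : R) : T -> T -> R := fun i j => a * (i == j)%:R - 1.

Lemma qform_Mq a x : qform (Mq a) x = a * sqnorm x - (\sum_i x i) ^+ 2.
Proof.
rewrite /qform /Mq sqr_sum /sqnorm mulr_sumr -sumrB; apply: eq_bigr => i _.
transitivity (\sum_j (a * x i * x j * (j == i)%:R) - \sum_j x i * x j).
  rewrite -sumrB; apply: eq_bigr => j _; rewrite (eq_sym i j); ring.
by rewrite sum_delta_r expr2 mulrA.
Qed.

Lemma qform_scale A c x : qform A (fun k => c * x k) = c ^+ 2 * qform A x.
Proof.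
rewrite /qform mulr_sumr; apply: eq_bigr => i _; rewrite mulr_sumr; apply: eq_bigr => j _; ring.
Qed.

Definition Eset A := [set sqnorm v | v in [set v : T -> R | in_S v /\ qform A v = 0]].

Lemma sqnorm_ge0 x : 0 <= sqnorm x.
Proof. by apply: sumr_ge0 => i _; rewrite sqr_ge0. Qed.

Lemma Eset_ub A : ubound (Eset A) (#|T|%:R).
Proof.
move=> _ [v [hS _] <-].
have : 2 * \sum_i v i <= sqnorm v + #|T|%:R.
  rewrite /sqnorm -sum1_card natr_sum mulr_sumr -big_split /=.
  apply: ler_sum => i _; have := sqr_ge0 (v i - 1); rewrite sqrrB; lra.
move: hS; rewrite /in_S => ->; lra.
Qed.

Lemma Eset_ne A : Eset A !=set0.
Proof.
exists 0; exists (fun _ => 0); last by rewrite /sqnorm big1 // => i _; rewrite expr0n.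
split; first by rewrite /in_S /sqnorm !big1 // => i _; rewrite expr0n.
by rewrite /qform big1 // => i _; rewrite big1 // => j _; rewrite !mul0r.
Qed.

Lemma Eset_has_ub A : has_ubound (Eset A).
Proof. exists (#|T|%:R); exact: Eset_ub. Qed.

Lemma sup_val_ge0 A : 0 <= sup_val A.
Proof.
apply: (ub_le_sup (Eset_has_ub A)); exists (fun _ => 0).
  split; first by rewrite /in_S /sqnorm !big1 // => i _; rewrite expr0n.
  by rewrite /qform big1 // => i _; rewrite big1 // => j _; rewrite !mul0r.
by rewrite /sqnorm big1 // => i _; rewrite expr0n.
Qed.

Lemma zero_set_bound A x : qform A x = 0 -> (\sum_i x i) ^+ 2 <= sup_val A * sqnorm x.
Proof.
move=> hx.
have a0 := sup_val_ge0 A.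
case: (eqVneq (sqnorm x) 0) => [n0|n0].
  have : forall i, x i = 0.
    move=> i; apply/eqP; rewrite -sqrf_eq0; apply/eqP.
    by move/psumr_eq0P: n0 => ->// j _; rewrite sqr_ge0.
  move=> x0; rewrite big1 ?expr0n ?n0 ?mulr0 // => i _; exact: x0.
have np : 0 < sqnorm x by rewrite lt_def n0 sqnorm_ge0.
pose c := (\sum_i x i) / sqnorm x.
have hv : Eset A ((\sum_i x i) ^+ 2 / sqnorm x).
  exists (fun k => c * x k).
    split; last by rewrite qform_scale hx mulr0.
    rewrite /in_S /sqnorm -mulr_sumr.
    transitivity (c ^+ 2 * sqnorm x).
      rewrite /c /sqnorm; field; exact: n0.
    by rewrite /sqnorm mulr_sumr; apply: eq_bigr => i _; ring.
  transitivity (c ^+ 2 * sqnorm x).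
    by rewrite /sqnorm mulr_sumr; apply: eq_bigr => i _; ring.
  rewrite /c; field; exact: n0.
have := ub_le_sup (Eset_has_ub A) hv.
by rewrite ler_pdivrMr.
Qed.

End SL2.
Section Prod.
Variable R : realType.
Variables T1 T2 : finType.

Lemma sum_pair (F : T1 * T2 -> R) : \sum_p F p = \sum_i \sum_j F (i, j).
Proof. rewrite (pair_bigA _ (fun i j => F (i, j))); apply: eq_bigr => -[i j] _. by []. Qed.

Lemma sum4 (F : T1 -> T2 -> T1 -> T2 -> R) :
  \sum_(p : T1 * T2) \sum_(q : T1 * T2) F p.1 p.2 q.1 q.2 =
  \sum_i \sum_j \sum_i' \sum_j' F i j i' j'.
Proof.
rewrite sum_pair; apply: eq_bigr => i _; apply: eq_bigr => j _; by rewrite sum_pair.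
Qed.

Lemma sum4' (F : T1 * T2 -> T1 * T2 -> R) :
  \sum_p \sum_q F p q = \sum_i \sum_j \sum_i' \sum_j' F (i, j) (i', j').
Proof.
rewrite sum_pair; apply: eq_bigr => i _; apply: eq_bigr => j _; by rewrite sum_pair.
Qed.

Lemma swap4 (H : T1 -> T2 -> T1 -> T2 -> R) :
  \sum_j \sum_j' \sum_i \sum_i' H i j i' j' = \sum_i \sum_j \sum_i' \sum_j' H i j i' j'.
Proof.
under eq_bigr do rewrite exchange_big.
rewrite exchange_big; apply: eq_bigr => i _; apply: eq_bigr => j _.
by rewrite exchange_big.
Qed.

Lemma swap4b (H : T1 -> T2 -> T1 -> T2 -> R) :
  \sum_i \sum_i' \sum_j \sum_j' H i j i' j' = \sum_i \sum_j \sum_i' \sum_j' H i j i' j'.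
Proof. apply: eq_bigr => i _; by rewrite exchange_big. Qed.

Lemma term1 (G1 : T1 -> T1 -> R) (w : T1 * T2 -> R) :
  \sum_i \sum_j \sum_i' \sum_j' w (i, j) * G1 i i' * w (i', j') =
  qform G1 (fun i => \sum_j w (i, j)).
Proof.
rewrite -(swap4b (fun i j i' j' => w (i, j) * G1 i i' * w (i', j'))) /qform.
apply: eq_bigr => i _; apply: eq_bigr => i' _.
rewrite !mulr_suml; apply: eq_bigr => j _; rewrite mulr_sumr; apply: eq_bigr => j' _.
ring.
Qed.

Lemma term2 (G2 : T2 -> T2 -> R) (w : T1 * T2 -> R) :
  \sum_i \sum_j \sum_i' \sum_j' w (i, j) * G2 j j' * w (i', j') =
  qform G2 (fun j => \sum_i w (i, j)).
Proof.
rewrite -(swap4 (fun i j i' j' => w (i, j) * G2 j j' * w (i', j'))) /qform.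
apply: eq_bigr => j _; apply: eq_bigr => j' _.
rewrite !mulr_suml; apply: eq_bigr => i _; rewrite mulr_sumr; apply: eq_bigr => i' _.
ring.
Qed.

Lemma term3 (G1 : T1 -> T1 -> R) (G2 : T2 -> T2 -> R) (w : T1 * T2 -> R) :
  \sum_i \sum_j \sum_i' \sum_j' w (i, j) * (G1 i i' * G2 j j') * w (i', j') =
  \sum_j \sum_j' G2 j j' * (\sum_i \sum_i' w (i, j) * G1 i i' * w (i', j')).
Proof.
rewrite -(swap4 (fun i j i' j' => w (i, j) * (G1 i i' * G2 j j') * w (i', j'))).
apply: eq_bigr => j _; apply: eq_bigr => j' _.
rewrite mulr_sumr; apply: eq_bigr => i _; rewrite mulr_sumr; apply: eq_bigr => i' _.
ring.
Qed.

Lemma Zpsd (G1 : T1 -> T1 -> R) (w : T1 * T2 -> R) : psd G1 ->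
  psd (fun j j' => \sum_i \sum_i' w (i, j) * G1 i i' * w (i', j')).
Proof.
move=> H x; have := H (fun i => \sum_j w (i, j) * x j).
suff -> : qform (fun j j' => \sum_i \sum_i' w (i, j) * G1 i i' * w (i', j')) x =
  qform G1 (fun i => \sum_j w (i, j) * x j) by [].
rewrite /qform.
transitivity (\sum_j \sum_j' \sum_i \sum_i' (x j * w (i, j)) * G1 i i' * (w (i', j') * x j')).
  apply: eq_bigr => j _; apply: eq_bigr => j' _.
  rewrite mulr_sumr mulr_suml; apply: eq_bigr => i _.
  rewrite mulr_sumr mulr_suml; apply: eq_bigr => i' _; ring.
rewrite (swap4 (fun i j i' j' => (x j * w (i, j)) * G1 i i' * (w (i', j') * x j'))).
rewrite -(swap4b (fun i j i' j' => (x j * w (i, j)) * G1 i i' * (w (i', j') * x j'))).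
apply: eq_bigr => i _; apply: eq_bigr => i' _.
rewrite !mulr_suml; apply: eq_bigr => j _; rewrite mulr_sumr; apply: eq_bigr => j' _.
ring.
Qed.

End Prod.
Section Main.
Variable R : realType.
Variables T1 T2 : finType.
Variables (e1 : rel T1) (e2 : rel T2).

Lemma qform_comb (T : finType) (M A : T -> T -> R) l x :
  qform (fun i j => M i j + l * A i j) x = qform M x + l * qform A x.
Proof.
rewrite /qform -sum2M -sum2D; apply: eq_bigr => i _; apply: eq_bigr => j _; ring.
Qed.

Lemma sum2B (T : finType) (F1 F2 : T -> T -> R) :
  \sum_i \sum_j (F1 i j - F2 i j) = \sum_i \sum_j F1 i j - \sum_i \sum_j F2 i j.
Proof. rewrite -sumrB; apply: eq_bigr => i _; by rewrite sumrB. Qed.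

Definition Cmat (A1 : T1 -> T1 -> R) (A2 : T2 -> T2 -> R) a b l1 l2 :
  T1 * T2 -> T1 * T2 -> R :=
  fun p q => (a * (p.1 == q.1)%:R + l1 * A1 p.1 q.1) *
             (b * (p.2 == q.2)%:R + l2 * A2 p.2 q.2) - a * b * (p == q)%:R.

Lemma Cmat_adj A1 A2 a b l1 l2 : weighted_adj e1 A1 -> weighted_adj e2 A2 ->
  weighted_adj (strong_prod e1 e2) (Cmat A1 A2 a b l1 l2).
Proof.
move=> [s1 d1 z1] [s2 d2 z2]; split.
- move=> [i j] [i' j']; rewrite /Cmat /= !xpair_eqE (eq_sym i) (eq_sym j) s1 s2.
  by rewrite (eq_sym i').
- move=> [i j]; rewrite /Cmat /= !eqxx d1 d2 /=; ring.
- move=> [i j] [i' j']; rewrite /Cmat /strong_prod /= xpair_eqE => hne hadj.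
  case: (eqVneq i i') hne hadj => [<-|ii'] /=.
    move=> jj' /norP[_ /norP[_ he2]].
    rewrite (negbTE jj') z2 // d1; ring.
  case he1: (e1 i i') => /=; last first.
    by move=> _ _; rewrite z1 ?he1 //; ring.
  move=> _; case: (eqVneq j j') => [_|jj'] //=; first by rewrite orbT.
  rewrite orbF => he2.
  rewrite z2 //; ring.
Qed.

Lemma Cmat_bound A1 A2 a b l1 l2 :
  (forall i j, A2 i j = A2 j i) ->
  (forall x, (\sum_i x i) ^+ 2 <= a * sqnorm x + l1 * qform A1 x) ->
  (forall x, (\sum_i x i) ^+ 2 <= b * sqnorm x + l2 * qform A2 x) ->
  forall w, (\sum_p w p) ^+ 2 <= a * b * sqnorm w + qform (Cmat A1 A2 a b l1 l2) w.
Proof.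
move=> s2 h1 h2 w.
pose G1 := fun i j => Mq a i j + l1 * A1 i j.
pose G2 := fun i j => Mq b i j + l2 * A2 i j.
have p1 : psd G1 by move=> x; rewrite qform_comb qform_Mq; have := h1 x; lra.
have p2 : psd G2 by move=> x; rewrite qform_comb qform_Mq; have := h2 x; lra.
have sG2 : forall i j, G2 i j = G2 j i by move=> i j; rewrite /G2 /Mq s2 eq_sym.
pose P := fun (p q : T1 * T2) => (a * (p.1 == q.1)%:R + l1 * A1 p.1 q.1) *
             (b * (p.2 == q.2)%:R + l2 * A2 p.2 q.2).
have E1 : qform (Cmat A1 A2 a b l1 l2) w =
   \sum_p \sum_q w p * P p q * w q - a * b * sqnorm w.
  have -> : sqnorm w = \sum_p \sum_q w p * (p == q)%:R * w q.
    rewrite /sqnorm; apply: eq_bigr => p _.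
    transitivity (\sum_q (q == p)%:R * (w p * w q)); last first.
      by apply: eq_bigr => q _; rewrite (eq_sym p); ring.
    by rewrite sum_delta_l expr2.
  rewrite -sum2M /qform -sum2B; apply: eq_bigr => p _; apply: eq_bigr => q _.
  rewrite /Cmat /P; ring.
have E3 : \sum_p \sum_q w p * P p q * w q = \sum_p \sum_q w p * w q +
   (\sum_p \sum_q w p * (G1 p.1 q.1 * G2 p.2 q.2) * w q +
    \sum_p \sum_q w p * G1 p.1 q.1 * w q + \sum_p \sum_q w p * G2 p.2 q.2 * w q).
  rewrite -!sum2D; apply: eq_bigr => p _; apply: eq_bigr => q _.
  rewrite /P /G1 /G2 /Mq; ring.
have t1 : 0 <= \sum_p \sum_q w p * G1 p.1 q.1 * w q.
  rewrite sum4' /= term1; exact: p1.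
have t2 : 0 <= \sum_p \sum_q w p * G2 p.2 q.2 * w q.
  rewrite sum4' /= term2; exact: p2.
have t3 : 0 <= \sum_p \sum_q w p * (G1 p.1 q.1 * G2 p.2 q.2) * w q.
  rewrite sum4' /= term3; exact: (frob_psd sG2 p2 (Zpsd w p1)).
rewrite E1 sqr_sum E3; lra.
Qed.

End Main.
Section Fin.
Variable R : realType.
Local Open Scope classical_set_scope.

Lemma cert (T : finType) (e : rel T) (A : T -> T -> R) : weighted_adj e A ->
  exists l, forall x, (\sum_i x i) ^+ 2 <= sup_val A * sqnorm x + l * qform A x.
Proof.
move=> [s d z].
have Hz : forall x, qform A x = 0 -> 0 <= qform (Mq (sup_val A)) x.
  by move=> x hx; rewrite qform_Mq; have := zero_set_bound hx; lra.
case: (pselect (exists p q, A p q != 0)) => [[p [q hpq]] | hno].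
  have h : forall t, qform A (fun k => 1 * (k == p)%:R + t * (k == q)%:R) = t * (2 * A p q).
    by move=> t; rewrite qform_delta2 !d (s q p); ring.
  have hp : 0 < A p q ^+ 2 by rewrite lt_def sqr_ge0 andbT sqrf_eq0.
  have [l hl] : exists l, forall z, 0 <= qform (Mq (sup_val A)) z + l * qform A z.
    apply: s_lemma Hz _ _.
      exists (fun k => 1 * (k == p)%:R + A p q * (k == q)%:R); rewrite h.
      have -> : A p q * (2 * A p q) = 2 * A p q ^+ 2 by ring.
      lra.
    exists (fun k => 1 * (k == p)%:R + (- A p q) * (k == q)%:R); rewrite h.
    have -> : - A p q * (2 * A p q) = - (2 * A p q ^+ 2) by ring.
    lra.
  exists l => x; have := hl x; rewrite qform_Mq; lra.
exists 0 => x.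
have hA : qform A x = 0.
  rewrite /qform big1 // => i _; rewrite big1 // => j _.
  have -> : A i j = 0.
    apply/eqP; apply: contraT => hne; exfalso; apply: hno; by exists i, j.
  by rewrite mulr0 mul0r.
by rewrite hA mul0r addr0; exact: zero_set_bound hA.
Qed.

Lemma wadj0 (T : finType) (e : rel T) : weighted_adj e (fun _ _ => (0 : R)).
Proof. by split. Qed.

Lemma alphaS_le (T : finType) (e : rel T) A : weighted_adj e A -> alphaS R e <= sup_val A.
Proof.
move=> w; apply: ge_inf; last by exists A.
exists 0 => _ [B _ <-]; exact: sup_val_ge0.
Qed.

Lemma alphaS_lb (T : finType) (e : rel T) x :
  (forall A, weighted_adj e A -> x <= sup_val A) -> x <= alphaS R e.
Proof.
move=> H; apply: lb_le_inf; first by exists (sup_val (fun _ _ : T => (0 : R))); exists (fun _ _ => 0) => //; exact: wadj0.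
by move=> _ [B hB <-]; exact: H.
Qed.

Lemma alphaS_ge0 (T : finType) (e : rel T) : 0 <= alphaS R e.
Proof. apply: alphaS_lb => A _; exact: sup_val_ge0. Qed.

End Fin.

Unset Implicit Arguments.

Theorem lemma3 (R : realType) (T1 T2 : finType) (e1 : rel T1) (e2 : rel T2) :
  simple_graph e1 -> simple_graph e2 ->
  alphaS R (strong_prod e1 e2) <= alphaS R e1 * alphaS R e2.
Proof.
move=> _ _.
have key : forall A1 A2, weighted_adj e1 A1 -> weighted_adj e2 A2 ->
    alphaS R (strong_prod e1 e2) <= sup_val A1 * sup_val A2.
  move=> A1 A2 w1 w2.
  have [l1 hl1] := cert w1; have [l2 hl2] := cert w2.
  have s2 : forall i j, A2 i j = A2 j i by case: w2.
  apply: le_trans (alphaS_le (Cmat_adj (sup_val A1) (sup_val A2) l1 l2 w1 w2)) _.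
  apply: ge_sup; first exact: Eset_ne.
  move=> _ [v [hS hq] <-].
  have := Cmat_bound s2 hl1 hl2 v; rewrite hq addr0.
  move: hS; rewrite /in_S => ->.
  have := sqnorm_ge0 v; have := sup_val_ge0 A1; have := sup_val_ge0 A2.
  set a := sup_val A1; set b := sup_val A2; set s := sqnorm v => ha hb hs hh.
  have hab : 0 <= a * b by apply: mulr_ge0.
  nra.
set al := alphaS R (strong_prod e1 e2).
have step1 : forall A2, weighted_adj e2 A2 -> al <= alphaS R e1 * sup_val A2.
  move=> A2 w2.
  have hb := sup_val_ge0 A2.
  case: (eqVneq (sup_val A2) 0) => [b0|bn0].
    rewrite b0 mulr0; have := key _ _ (wadj0 R e1) w2; by rewrite b0 mulr0.
  have bp : 0 < sup_val A2 by rewrite lt_def bn0 hb.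
  rewrite -ler_pdivrMr //; apply: alphaS_lb => A1 w1.
  rewrite ler_pdivrMr //; exact: key.
have ha := alphaS_ge0 R e1.
case: (eqVneq (alphaS R e1) 0) => [a0|an0].
  rewrite a0 mul0r; have := step1 _ (wadj0 R e2); by rewrite a0 mul0r.
have ap : 0 < alphaS R e1 by rewrite lt_def an0 ha.
rewrite mulrC -ler_pdivrMr //; apply: alphaS_lb => A2 w2.
rewrite ler_pdivrMr // mulrC; exact: step1.
Qed.
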